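(* Let $(M,\mathcal A)$ be a measurable space, $m$ a probability measure on it, $\ell_1,\ell_2,\dots:M\to\mathbb R$ measurable functions, $L_0=0$, $L_t=\sum_{s=1}^t\ell_s$, and $(\beta_t)_{t\ge1}$ with $0<\beta_{t+1}\le\beta_t$ for all $t$. Assume all integrals $\int e^{-\beta_sL_t}\mathrm dm$ appearing below are finite, and define $\mathrm dm_t=e^{-\beta_tL_{t-1}}\mathrm dm/\int e^{-\beta_tL_{t-1}}\mathrm dm$. Then for all $n\ge1$, \[-\sum_{t=1}^n\frac{1}{\beta_t}\ln\Big(\int_Me^{-\beta_t\ell_t}\,\mathrm dm_t\Big)\le-\frac{1}{\beta_{n+1}}\ln\Big(\int_Me^{-\beta_{n+1}L_n}\,\mathrm dm\Big).\] *)

(* Defs.v *)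
From mathcomp Require Import all_boot all_order all_algebra.
From mathcomp Require Import all_classical all_reals all_analysis.
Set Implicit Arguments. Unset Strict Implicit. Unset Printing Implicit Defensive.
Import Order.TTheory GRing.Theory Num.Theory.
Local Open Scope ring_scope.

(* L_t = \sum_{s=1}^t ell_s  (so L_0 = 0); ell_0 is unused. *)
Definition Lsum {T} {R : realType} (ell : nat -> T -> R) (t : nat) (x : T) : R :=
  \sum_(1 <= s < t.+1) ell s x.

Definition gibbsZ d (T : measurableType d) (R : realType)
  (m : {measure set T -> \bar R}) (beta : nat -> R) (ell : nat -> T -> R) (t : nat) : R :=
  fine (\int[m]_x (expR (- beta t * Lsum ell t.-1 x))%:E).

(* integral of f against dm_t = exp(-beta_t L_{t-1}) dm / Z_t *)
Definition gibbs_int d (T : measurableType d) (R : realType)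
  (m : {measure set T -> \bar R}) (beta : nat -> R) (ell : nat -> T -> R) (t : nat)
  (f : T -> R) : R :=
  fine (\int[m]_x (f x * expR (- beta t * Lsum ell t.-1 x))%:E) / gibbsZ m beta ell t.

(* Main.v *)
Require Import Defs.
From mathcomp Require Import all_boot all_order all_algebra.
From mathcomp Require Import all_classical all_reals all_analysis.
From mathcomp Require Import measurable_realfun ring lra.
Import Order.TTheory GRing.Theory Num.Theory.
Local Open Scope ring_scope.

Lemma LsumS {T} {R : realType} (ell : nat -> T -> R) t x :
  Lsum ell t.+1 x = Lsum ell t x + ell t.+1 x.
Proof. by rewrite /Lsum big_nat_recr. Qed.

Lemma Lsum0 {T} {R : realType} (ell : nat -> T -> R) x : Lsum ell 0 x = 0.
Proof. by rewrite /Lsum big_geq. Qed.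

Lemma measurable_Lsum d (T : measurableType d) (R : realType) (ell : nat -> T -> R) :
  (forall t, (1 <= t)%N -> measurable_fun setT (ell t)) ->
  forall t, measurable_fun setT (Lsum ell t).
Proof.
move=> hell; elim=> [|t IH].
  rewrite (_ : Lsum ell 0 = cst 0); first exact: measurable_cst.
  by apply/funext => x; rewrite Lsum0.
rewrite (_ : Lsum ell t.+1 = Lsum ell t \+ ell t.+1).
  by apply: measurable_funD => //; exact: hell.
by apply/funext => x; rewrite LsumS.
Qed.

Lemma measurable_expM d (T : measurableType d) (R : realType) (g : T -> R) (b : R) :
  measurable_fun setT g -> measurable_fun setT (fun x => expR (b * g x)).
Proof.
move=> mg; apply: measurableT_comp; first exact: measurable_expR.
exact: measurable_funM.
Qed.

Lemma int_exp_gt0 d (T : measurableType d) (R : realType) (m : probability T R)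
  (h : T -> R) : measurable_fun setT h ->
  (\int[m]_x (expR (h x))%:E < +oo)%E ->
  0 < fine (\int[m]_x (expR (h x))%:E).
Proof.
move=> mh hfin; apply: fine_gt0; rewrite hfin andbT.
rewrite lt_def integral_ge0 ?andbT; last by move=> x _; rewrite lee_fin expR_ge0.
apply/negP => /eqP I0.
have mf : measurable_fun setT (fun x => (expR (h x))%:E).
  apply/measurable_EFinP; apply: measurableT_comp => //; exact: measurable_expR.
have := (ae_eq_integral_abs m measurableT mf).1.
have -> : (\int[m]_(x in setT) `|(expR (h x))%:E|)%E = 0%R.
  rewrite -[RHS]I0; apply: eq_integral => x _.
  by rewrite gee0_abs // lee_fin expR_ge0.
move=> /(_ erefl) [N [mN N0 sub]].
have : (m setT <= m N)%E.
  apply: le_measure; rewrite ?inE //.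
  move=> x _; apply: sub => /= /(_ I) /= /eqP.
  by rewrite eqe gt_eqF // expR_gt0.
by rewrite N0 probability_setT lee_fin ler10.
Qed.

Lemma int_exp_gt0' d (T : measurableType d) (R : realType) (m : probability T R)
  (G : T -> R) (b : R) : measurable_fun setT G ->
  (\int[m]_x (expR (b * G x))%:E < +oo)%E ->
  0 < fine (\int[m]_x (expR (b * G x))%:E).
Proof.
move=> mG; apply: (@int_exp_gt0 _ _ _ m (fun x => b * G x)).
exact: measurable_funM.
Qed.

Lemma holder_exp d (T : measurableType d) (R : realType) (m : probability T R)
  (G : T -> R) (a b : R) :
  measurable_fun setT G -> 0 < b -> b <= a ->
  (\int[m]_x (expR (- a * G x))%:E < +oo)%E ->
  fine (\int[m]_x (expR (- b * G x))%:E) <=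
  fine (\int[m]_x (expR (- a * G x))%:E) `^ (b / a).
Proof.
move=> mG b0 ba hfin.
have a0 : 0 < a by apply: lt_le_trans ba.
have [<-|nab] := eqVneq b a.
  rewrite divff ?gt_eqF // powRr1 //; apply: fine_ge0.
  by apply: integral_ge0 => x _; rewrite lee_fin expR_ge0.
set W := (\int[m]_x (expR (- a * G x))%:E)%E.
have W0 : (0 <= W)%E by apply: integral_ge0 => x _; rewrite lee_fin expR_ge0.
have Wfin : W \is a fin_num by rewrite ge0_fin_numE.
have ltba : b < a by rewrite lt_neqAle nab ba.
pose F x := expR (- b * G x).
have mF : measurable_fun setT F by apply: measurable_expM.
have p0 : 0 < a / b by rewrite divr_gt0.
have q0 : 0 < a / (a - b) by rewrite divr_gt0 // subr_gt0.
have pq : (a / b)^-1 + (a / (a - b))^-1 = 1.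
  by rewrite !invf_div -mulrDl addrC subrK divff // gt_eqF.
have := hoelder m mF (@measurable_cst _ _ T _ setT (1:R)) p0 q0 pq.
rewrite Lnorm1.
have -> : (\int[m]_x `|(EFin \o (F \* cst 1)%R) x| =
    \int[m]_x (expR (- b * G x))%:E)%E.
  by apply: eq_integral => x _ /=; rewrite mulr1 ger0_norm // expR_ge0.
have -> : Lnorm m (a / (a - b))%:E (EFin \o cst 1%R) = 1%E.
  rewrite (@Lnorm_cst1 _ _ _ m) [X in (X `^ _)%E](_ : _ = 1%E) ?poweR1r //; exact: probability_setT.
rewrite mule1 unlock.
have -> : (\int[m]_x (`|(EFin \o F) x| `^ (a / b)) = W)%E.
  apply: eq_integral => x _ /=.
  rewrite ger0_norm ?expR_ge0 // /F -expRM; congr (expR _)%:E; field; by rewrite gt_eqF.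
rewrite -(fineK Wfin) poweR_EFin invf_div => hle.
have I0 : (0 <= \int[m]_x (expR (- b * G x))%:E)%E.
  by apply: integral_ge0 => x _; rewrite lee_fin expR_ge0.
have Ifin : (\int[m]_x (expR (- b * G x))%:E)%E \is a fin_num.
  by rewrite ge0_fin_numE // (le_lt_trans hle) // ltry.
by rewrite /= -lee_fin fineK.
Qed.

Lemma telesc (R : realType) (c a : nat -> R) :
  (forall t, (1 <= t)%N -> c t.+1 <= a t) ->
  forall k, \sum_(1 <= t < k.+1) (c t - a t) <= c 1%N - c k.+1.
Proof.
move=> step; elim=> [|k IH]; first by rewrite big_geq // subrr.
rewrite big_nat_recr //=.
apply: le_trans (lerD IH (lexx _)) _.
have := step k.+1 erefl; lra.
Qed.

Theorem mainTheorem10 (d : measure_display) (T : measurableType d) (R : realType)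
  (m : probability T R) (ell : nat -> T -> R) (beta : nat -> R)
  (hell : forall t, (1 <= t)%N -> measurable_fun setT (ell t))
  (hbeta : forall t, (1 <= t)%N -> 0 < beta t.+1 /\ beta t.+1 <= beta t)
  (hfin1 : forall t, (1 <= t)%N ->
     (\int[m]_x (expR (- beta t * Lsum ell t.-1 x))%:E < +oo)%E)
  (hfin2 : forall t, (1 <= t)%N ->
     (\int[m]_x (expR (- beta t * Lsum ell t x))%:E < +oo)%E)
  (n : nat) (hn : (1 <= n)%N) :
  - (\sum_(1 <= t < n.+1)
        (beta t)^-1 * ln (gibbs_int m beta ell t (fun x => expR (- beta t * ell t x))))
  <= - (beta n.+1)^-1 * ln (fine (\int[m]_x (expR (- beta n.+1 * Lsum ell n x))%:E)).
Proof.
have mL := @measurable_Lsum _ _ _ ell hell.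
pose Z t := fine (\int[m]_x (expR (- beta t * Lsum ell t.-1 x))%:E).
pose W t := fine (\int[m]_x (expR (- beta t * Lsum ell t x))%:E).
pose c t := (beta t)^-1 * ln (Z t).
pose a t := (beta t)^-1 * ln (W t).
have Zpos t : (1 <= t)%N -> 0 < Z t.
  move=> t1; apply: (@int_exp_gt0' _ _ _ m (Lsum ell t.-1) (- beta t) (mL _)).
  exact: hfin1.
have Wpos t : (1 <= t)%N -> 0 < W t.
  move=> t1; apply: (@int_exp_gt0' _ _ _ m (Lsum ell t) (- beta t) (mL _)).
  exact: hfin2.
have term t : (1 <= t)%N ->
    (beta t)^-1 * ln (gibbs_int m beta ell t (fun x => expR (- beta t * ell t x)))
    = a t - c t.
  case: t => // t _.
  rewrite /gibbs_int /a /c -mulrBr; congr (_ * _).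
  have -> : fine (\int[m]_x (expR (- beta t.+1 * ell t.+1 x) *
            expR (- beta t.+1 * Lsum ell t.+1.-1 x))%:E) = W t.+1.
    rewrite /W; congr fine; apply: eq_integral => x _; congr EFin.
    by rewrite -expRD -mulrDr addrC -LsumS.
  have hW := Wpos t.+1 erefl; have hZ := Zpos t.+1 erefl.
  exact: (ln_div hW hZ).
have step t : (1 <= t)%N -> c t.+1 <= a t.
  move=> t1; have [b0 ba] := hbeta t t1.
  have a0 : 0 < beta t by apply: lt_le_trans ba.
  have H := @holder_exp _ _ _ m _ _ _ (mL t) b0 ba (hfin2 t t1).
  have hW := Wpos t t1; have hZ := Zpos t.+1 erefl.
  have hP : 0 < W t `^ (beta t.+1 / beta t) by apply: powR_gt0.
  have {}H : ln (Z t.+1) <= ln (W t `^ (beta t.+1 / beta t)).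
    by rewrite (ler_ln hZ hP).
  rewrite ln_powR in H; rewrite /c /a.
  rewrite -(ler_pM2l b0) mulrA mulfV ?gt_eqF // mul1r.
  by apply: (le_trans H); rewrite mulrA (mulrC (beta t.+1)) -mulrA.
have c1 : c 1%N = 0.
  rewrite /c /Z /=.
  have -> : (\int[m]_x (expR (- beta 1%N * Lsum ell 0 x))%:E)%E = 1%E.
    under eq_integral => x _ do rewrite Lsum0 mulr0 expR0.
    rewrite integral_cst // mul1e; exact: probability_setT.
  by rewrite /= ln1 mulr0.
have ind := @telesc _ c a step.
under eq_big_nat => t /andP[t1 _] do rewrite (term t t1).
have -> : - (\sum_(1 <= t < n.+1) (a t - c t)) = \sum_(1 <= t < n.+1) (c t - a t).
  by rewrite -sumrN; apply: eq_bigr => t _; rewrite opprB.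
apply: le_trans (ind n) _.
rewrite c1 sub0r mulNr.
exact: lexx.
Qed.
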